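(* Suppose $k_{i_1\dots i_m}=\mathrm{sTr}(T_{i_1},\dots,T_{i_m})$ for a matrix representation $T_i$ of $\mathfrak g$. Then the form $\alpha$ of Proposition 4.1 equals $$\alpha=\frac{(2m-1)!}{((m-1)!)^2}\int_0^1dt\;\mathrm{Tr}\Big(\omega\big(tF+t(t-1)\,\omega^2\big)^{m-1}\Big),$$ and its gauged version $\widetilde\alpha$, obtained by replacing every $\omega$ by $\widetilde\omega=g^{-1}(d-A^\alpha L_\alpha)g=\omega-A$, is $$\widetilde\alpha=\frac{(2m-1)!}{((m-1)!)^2}\int_0^1dt\;\mathrm{Tr}\Big(\widetilde\omega\big(tF+t(t-1)\,\widetilde\omega^2\big)^{m-1}\Big).$$
   Context: $G$ is a simple compact simply connected matrix Lie group, $\omega=g^{-1}dg=\omega^iT_i$ its left-invariant Maurer–Cartan form, $\omega^2:=\omega\wedge\omega$ (matrix product), so $d\omega=-\omega^2$. $H\subset G$ is a Lie subgroup acting by right translations, with Lie algebra $\mathcal H$ spanned by $T_\alpha$ ($\alpha=1,\dots,\dim H$) among a basis $T_i$ of $\mathfrak g$; $F^\alpha$ are commuting degree-2 indeterminates, $F:=F^\alpha T_\alpha$, $A^\alpha$ are degree-1 generators, $A:=A^\alpha T_\alpha$. For matrix-valued forms $Y_1,\dots,Y_m$, $\mathrm{sTr}(Y_1,\dots,Y_m):=\frac1{m!}\sum_{\sigma\in S_m}\epsilon_\sigma\mathrm{Tr}(Y_{\sigma(1)}\cdots Y_{\sigma(m)})$ with $\epsilon_\sigma$ the Koszul sign from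 permuting odd-degree factors. With $\{\omega^i\}$ dual to $\{T_i\}$, $\Omega'_{(p)\,\alpha_1\dots\alpha_{p-1}}:=k_{\alpha_1\dots\alpha_{p-1}i_p\dots i_m}d\omega^{i_p}\wedge\dots\wedge d\omega^{i_{m-1}}\wedge\omega^{i_m}$, $\alpha_m(p):=\prod_{r=1}^{p-1}\frac{2m-r}{r}$, and $\alpha:=\sum_{p=1}^m\alpha_m(p)\,\Omega'_{(p)\,\alpha_1\dots\alpha_{p-1}}F^{\alpha_1}\cdots F^{\alpha_{p-1}}$. *)

(* Defs.v *)
(* Algebraic model: the identity lives in an arbitrary
   K-algebra containing odd (pairwise anticommuting) generators w^i (the
   Maurer-Cartan 1-forms), optionally odd A^alpha, and central F^alpha. *)
From HB Require Import structures.
From mathcomp Require Import all_boot all_order all_algebra.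
From mathcomp Require Import fingroup perm.
Set Implicit Arguments. Unset Strict Implicit. Unset Printing Implicit Defensive.
Import Order.TTheory GRing.Theory Num.Theory.
Local Open Scope ring_scope.

Section Defs.
Variables (K : numFieldType) (A : algType K) (n h N : nat).
Variables (e : 'I_h -> 'I_n) (c : 'I_n -> 'I_n -> 'I_n -> K)
          (T : 'I_n -> 'M[K]_N.+1).

Definition sTr (s : seq 'M[K]_N.+1) : K :=
  ((size s)`!%:R)^-1 * \sum_(p : 'S_(size s)) \tr (\prod_(j < size s) nth 0 s (p j)).

Definition kcoef (s : seq 'I_n) : K := sTr (map T s).

(* d w^i = -(w^2)^i = -1/2 c_{jk}^i w^j w^k   (Maurer-Cartan),
   with [T_j, T_k] = sum_i c j k i T_i *)
Definition dform (w : 'I_n -> A) (i : 'I_n) : A :=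
  - ((2%:R : K)^-1 *: \sum_j \sum_k (c j k i *: (w j * w k))).

Definition alpha_m (m p : nat) : K :=
  \prod_(1 <= r < p) ((2 * m - r)%:R / r%:R).

(* Omega'_{(p) a_1 .. a_{p-1}} = k_{a_1..a_{p-1} i_p .. i_m}
     dw^{i_p} ... dw^{i_{m-1}} w^{i_m}   (a = [a_1;..;a_{p-1}], p = size a + 1) *)
Definition Omega' (m p : nat) (w : 'I_n -> A) (a : seq 'I_h) : A :=
  \sum_(d : (m - p).-tuple 'I_n) \sum_(l : 'I_n)
     kcoef (map e a ++ d ++ [:: l]) *: ((\prod_(x <- d) dform w x) * w l).

Definition alpha (m : nat) (w : 'I_n -> A) (f : 'I_h -> A) : A :=
  \sum_(1 <= p < m.+1) alpha_m m p *:
     \sum_(a : (p.-1).-tuple 'I_h) (Omega' m p w a * \prod_(x <- a) f x).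

Definition mxw (w : 'I_n -> A) : 'M[A]_N.+1 :=
  \matrix_(i, j) \sum_k (T k i j *: w k).
Definition mxF (f : 'I_h -> A) : 'M[A]_N.+1 :=
  \matrix_(i, j) \sum_a (T (e a) i j *: f a).

(* int_0^1 dt of a polynomial in t with coefficients in A *)
Definition int01 (p : {poly A}) : A :=
  \sum_(i < size p) (((i.+1)%:R : K)^-1 *: p`_i).

Definition rhs (m : nat) (w : 'I_n -> A) (f : 'I_h -> A) : A :=
  let W : 'M[{poly A}]_N.+1 := map_mx polyC (mxw w) in
  let F : 'M[{poly A}]_N.+1 := map_mx polyC (mxF f) in
  let t : {poly A} := 'X in
  let M : 'M[{poly A}]_N.+1 := t%:M *m F + (t * (t - 1))%:M *m (W *m W) in
  let coef : K := ((2 * m).-1)`!%:R / (((m.-1)`!)%:R ^+ 2) in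
  coef *: int01 (\tr (W *m M ^+ m.-1)).

Definition gauged (w : 'I_n -> A) (a : 'I_h -> A) : 'I_n -> A :=
  fun i => w i - \sum_(b | e b == i) a b.

End Defs.

(* Main.v *)
Require Import Defs.
From HB Require Import structures.
From mathcomp Require Import all_boot all_order all_algebra.
From mathcomp Require Import fingroup perm.
From mathcomp Require Import bigenough.
From mathcomp Require Import ring zify.
From mathcomp Require Import mpoly.
Import Order.TTheory GRing.Theory Num.Theory BigEnough.
Local Open Scope ring_scope.
Set Implicit Arguments. Unset Strict Implicit. Unset Printing Implicit Defensive.


Lemma prod_split (R : pzSemiRingType) m (G : 'I_m.+1 -> R) (p : 'I_m.+1) :
  \prod_(j < m.+1) G j =
  (\prod_(0 <= k < p) G (inord k)) * G p * \prod_(p.+1 <= k < m.+1) G (inord k).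
Proof.
rewrite (eq_bigr (fun j : 'I_m.+1 => G (inord j))); last by move=> j _; rewrite inord_val.
rewrite -(big_mkord xpredT (fun k => G (inord k))).
rewrite (@big_cat_nat _ _ _ p) ?(ltnW (ltn_ord p)) //=.
by rewrite (big_ltn (ltn_ord p)) inord_val mulrA.
Qed.

Lemma tsum0 (V : nmodType) (I : finType) (G : 0.-tuple I -> V) :
  \sum_(t : 0.-tuple I) G t = G [tuple].
Proof. by rewrite (big_pred1 [tuple]) // => t /=; rewrite [t]tuple0; apply/esym/eqP. Qed.

Lemma tsumS (V : nmodType) (I : finType) L (G : L.+1.-tuple I -> V) :
  \sum_(t : L.+1.-tuple I) G t = \sum_x \sum_(t : L.-tuple I) G [tuple of x :: t].
Proof.
rewrite pair_big /=.
rewrite (reindex (fun p : I * L.-tuple I => [tuple of p.1 :: p.2])) //=.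
exists (fun t : L.+1.-tuple I => (thead t, [tuple of behead t])).
  by move=> [x t] _ /=; congr pair; apply: val_inj.
by move=> t _; rewrite [RHS]tuple_eta.
Qed.

Lemma nseq_cat_cons (T : Type) k (x : T) S : nseq k x ++ x :: S = x :: nseq k x ++ S.
Proof. by elim: k => //= k ->. Qed.

Section STU.
Variables (B : comNzRingType) (d : nat).
Local Notation M := 'M[B]_d.+1.

Definition sTu (s : seq M) : B :=
  \sum_(σ : 'S_(size s)) \tr (\prod_(j < size s) nth 0 s (σ j)).

Lemma sTuE m s : size s = m ->
  sTu s = \sum_(σ : 'S_m) \tr (\prod_(j < m) nth 0 s (σ j)).
Proof. by move=> Hs; subst m. Qed.

Lemma sTu_perm s s' : perm_eq s s' -> sTu s = sTu s'.
Proof.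
move=> pss'; rewrite [RHS](sTuE (m := size s)); last by rewrite (perm_size pss').
have : perm_eq s' (in_tuple s) by rewrite perm_sym.
case/tuple_permP => τ Hs'.
rewrite /sTu (reindex_inj (@mulIg _ τ)) /=; apply: eq_bigr => σ _.
congr (\tr _); apply: eq_bigr => j _.
rewrite Hs' permM -(tnth_nth 0 (mktuple _)) tnth_mktuple (tnth_nth 0) //.
Qed.

Section Slot.
Variables (P S : seq M).
Local Notation m := (size P + size S)%N.
Definition pos (σ : 'S_m.+1) : 'I_m.+1 := (σ^-1)%g (inord (size P)).
Definition H0 (i : nat) : M := nth 0 (P ++ 0 :: S) i.
Definition Lf (σ : 'S_m.+1) : M := \prod_(0 <= k < pos σ) H0 (σ (inord k)).
Definition Rf (σ : 'S_m.+1) : M := \prod_((pos σ).+1 <= k < m.+1) H0 (σ (inord k)).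

Lemma nth_slot X Y i : i != size P -> nth 0 (P ++ X :: S) i = nth 0 (P ++ Y :: S) i.
Proof.
move=> hi; rewrite !nth_cat; case: ltnP => // h.
case E: (i - size P)%N => [|j] //=.
by move: hi; rewrite eqn_leq h andbT -subn_eq0 E.
Qed.

Lemma slot_ne (σ : 'S_m.+1) k : (k < m.+1)%N -> k != pos σ -> 
  val (σ (inord k)) != size P.
Proof.
move=> hk hne; apply/eqP => E.
have : σ (inord k) = inord (size P) by apply: val_inj; rewrite /= E inordK // ltnS leq_addr.
move/(congr1 (σ^-1)%g); rewrite permK -/(pos σ) => E2.
by move: hne; rewrite -E2 inordK // eqxx.
Qed.

Lemma sTu_slot X : sTu (P ++ X :: S) = \sum_(σ : 'S_m.+1) \tr (Lf σ * X * Rf σ).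
Proof.
rewrite (sTuE (m := m.+1)); last by rewrite size_cat /= addnS.
apply: eq_bigr => σ _; congr (\tr _).
rewrite (@prod_split _ m _ (pos σ)); congr (_ * _ * _).
- apply: eq_big_nat => k /andP [_ hk]; rewrite /H0; apply: nth_slot.
  apply: slot_ne; first by apply: (ltn_trans hk).
  by rewrite neq_ltn hk.
- rewrite /pos permKV inordK ?ltnS ?leq_addr //.
  by rewrite nth_cat ltnn subnn.
- apply: eq_big_nat => k /andP [hk1 hk2]; rewrite /H0; apply: nth_slot.
  apply: slot_ne => //; by rewrite neq_ltn hk1 orbT.
Qed.

Lemma sTu_slot_sum (I : finType) (z : I -> B) (F : I -> M) :
  sTu (P ++ (\sum_x z x *: F x) :: S) = \sum_x z x * sTu (P ++ F x :: S).
Proof.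
rewrite sTu_slot.
have -> : \sum_x z x * sTu (P ++ F x :: S) =
   \sum_x \sum_(σ : 'S_m.+1) z x * \tr (Lf σ * F x * Rf σ).
  by apply: eq_bigr => x _; rewrite sTu_slot mulr_sumr.
rewrite [RHS]exchange_big /=; apply: eq_bigr => σ _.
rewrite mulr_sumr mulr_suml raddf_sum; apply: eq_bigr => x _ /=.
by rewrite -scalerAr -scalerAl mxtraceZ.
Qed.

Lemma sTu_slotD X Y : sTu (P ++ (X + Y) :: S) = sTu (P ++ X :: S) + sTu (P ++ Y :: S).
Proof.
rewrite !sTu_slot -big_split /=; apply: eq_bigr => σ _.
by rewrite mulrDr mulrDl raddfD.
Qed.

Lemma sTu_slotZ c X : sTu (P ++ (c *: X) :: S) = c * sTu (P ++ X :: S).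
Proof.
rewrite !sTu_slot mulr_sumr; apply: eq_bigr => σ _.
by rewrite -scalerAr -scalerAl mxtraceZ.
Qed.
End Slot.
End STU.


Section STU2.
Variables (B : comNzRingType) (d : nat).
Local Notation M := 'M[B]_d.+1.
Local Notation sTu := (@sTu B d).

Lemma sTu_scal c U q P S :
  sTu (P ++ nseq q (c *: U) ++ S) = c ^+ q * sTu (P ++ nseq q U ++ S).
Proof.
elim: q P => [|q IH] P; first by rewrite expr0 mul1r.
rewrite /= sTu_slotZ -!cat_rcons IH.
by rewrite mulrA -exprS.
Qed.

Lemma sTu_tsum (I : finType) (z : I -> B) (F : I -> M) L P S :
  \sum_(i : L.-tuple I) (\prod_(x <- i) z x) * sTu (P ++ map F i ++ S) =
  sTu (P ++ nseq L (\sum_x z x *: F x) ++ S).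
Proof.
elim: L P => [|L IH] P; first by rewrite tsum0 big_nil mul1r.
rewrite tsumS /= sTu_slot_sum; apply: eq_bigr => x _.
rewrite -cat_rcons -IH mulr_sumr; apply: eq_bigr => t _.
by rewrite big_cons /= mulrA cat_rcons.
Qed.

Lemma sTu_binom U V L S :
  sTu (nseq L (U + V) ++ S) =
  \sum_(0 <= q < L.+1) sTu (nseq q U ++ nseq (L - q) V ++ S) *+ 'C(L, q).
Proof.
elim: L S => [|L IH] S; first by rewrite big_nat1 /= mulr1n.
have -> : sTu (nseq L.+1 (U + V) ++ S) = sTu (nseq L (U + V) ++ (U + V) :: S).
  by apply: sTu_perm; rewrite /= -cat1s perm_catCA.
rewrite IH.
have E1 q : sTu (nseq q U ++ nseq (L - q) V ++ (U + V) :: S) =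
   sTu (nseq q.+1 U ++ nseq (L - q) V ++ S) +
   sTu (nseq q U ++ nseq (L - q).+1 V ++ S).
  rewrite catA sTu_slotD -catA; congr (_ + _).
    apply: sTu_perm; rewrite /= catA.
    by rewrite -cat1s perm_catCA /= -catA perm_refl.
  by rewrite -catA nseq_cat_cons.
under eq_bigr do rewrite E1 mulrnDl.
rewrite big_split /=.
rewrite [in RHS](big_nat_recl _ _ _ (leq0n _)) /= bin0 mulr1n.
set A := fun q r => sTu (nseq q U ++ nseq r V ++ S).
have -> : \sum_(0 <= i < L.+1) A i.+1 (L.+1 - i.+1)%N *+ 'C(L.+1, i.+1) =
  \sum_(0 <= i < L.+1) A i.+1 (L - i)%N *+ 'C(L, i.+1) +
  \sum_(0 <= i < L.+1) A i.+1 (L - i)%N *+ 'C(L, i).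
  by rewrite -big_split /=; apply: eq_bigr => i _; rewrite binS mulrnDr.
rewrite addrA addrC; congr (_ + _).
rewrite (big_nat_recl _ _ _ (leq0n _)) bin0 mulr1n subn0.
rewrite (big_nat_recr _ _ _ (leq0n _)) /= bin_small // mulr0n addr0.
congr (_ + _); apply: eq_big_nat => i /andP [_ hi].
by rewrite /A -(subnSK hi).
Qed.

Lemma sTu_trace Z T L :
  sTu (nseq L Z ++ [:: T]) = \tr (T * Z ^+ L) *+ L.+1`!.
Proof.
rewrite (sTu_slot (nseq L Z) [::] T).
have hm : (size (nseq L Z) + size ([::] : seq M))%N = L by rewrite size_nseq addn0.
have HZ (σ : 'S_(size (nseq L Z) + size ([::] : seq M)).+1) k :
   (k < (size (nseq L Z) + size ([::] : seq M)).+1)%N -> k != pos σ ->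
   H0 (nseq L Z) [::] (σ (inord k)) = Z.
  move=> hk hne; have hv2 := slot_ne hk hne; rewrite /H0.
  have hv1 : (nat_of_ord (σ (inord k)) < L.+1)%N :=
    leq_trans (ltn_ord _) (eq_leq (congr1 S hm)).
  have hv3 : nat_of_ord (σ (inord k)) != L.
    apply: contra hv2 => /eqP E; apply/eqP; apply: (etrans E); by rewrite size_nseq.
  have hl : (nat_of_ord (σ (inord k)) < L)%N by rewrite ltn_neqAle hv3 -ltnS.
  move: hl; move: (nat_of_ord (σ (inord k))) => v hl.
  by rewrite nth_cat size_nseq hl nth_nseq hl.
have -> : \sum_(σ : 'S_(size (nseq L Z) + size ([::] : seq M)).+1)
     \tr (Lf (P:=nseq L Z) (S:=[::]) σ * T * Rf (P:=nseq L Z) (S:=[::]) σ)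
    = \sum_(σ : 'S_(size (nseq L Z) + size ([::] : seq M)).+1) \tr (T * Z ^+ L).
  apply: eq_bigr => σ _; rewrite /Lf /Rf.
  rewrite (eq_big_nat _ _ (F2 := fun=> Z)); last first.
    move=> k /andP [_ hk]; apply: HZ; first exact: (ltn_trans hk).
    by rewrite neq_ltn hk.
  rewrite [X in _ * X](eq_big_nat _ _ (F2 := fun=> Z)); last first.
    move=> k /andP [hk1 hk2]; apply: HZ => //.
    by rewrite neq_ltn hk1 orbT.
  rewrite !prodr_const_nat subn0.
  rewrite -!mulmxE mxtrace_mulC mulmxA !mulmxE -exprD.
  rewrite -mulmxE mxtrace_mulC mulmxE.
  congr (\tr (_ * Z ^+ _)).
  by rewrite subSS subnK; [exact: hm | rewrite -ltnS].
by rewrite sumr_const card_Sn hm.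
Qed.
End STU2.


Section Int01.
Variables (K : numFieldType) (A : algType K).

Lemma int01E (p : {poly A}) L : (size p <= L)%N ->
  int01 p = \sum_(i < L) (((i.+1)%:R : K)^-1 *: p`_i).
Proof.
move=> hL; rewrite /int01 (big_ord_widen L (fun i => ((i.+1)%:R : K)^-1 *: p`_i)) //.
rewrite big_mkcond; apply: eq_bigr => i _; case: ltnP => // h.
by rewrite nth_default // scaler0.
Qed.

Lemma int01_is_additive : additive (@int01 K A).
Proof.
move=> p q; rewrite (@int01E (p - q) (size p + size q)); last first.
  apply: leq_trans (size_polyD _ _) _; rewrite size_polyN geq_max leq_addr leq_addl //.
rewrite (@int01E p (size p + size q)) ?leq_addr // (@int01E q (size p + size q)) ?leq_addl //.
rewrite -sumrB; apply: eq_bigr => i _; by rewrite coefB scalerBr.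
Qed.

HB.instance Definition _ := GRing.isAdditive.Build {poly A} A (@int01 K A) int01_is_additive.

Lemma int01CM (c : A) p : int01 (c%:P * p) = c * int01 p.
Proof.
rewrite (@int01E _ (size p)); last first.
  apply: leq_trans (size_polyMleq _ _) _.
  by have := size_polyC_leq1 c; case: (size c%:P) => [|[]] //= _; apply: leq_pred.
rewrite /int01 mulr_sumr; apply: eq_bigr => i _.
by rewrite coefCM scalerAr.
Qed.

Lemma int01Xn a : int01 ('X^a : {poly A}) = (((a.+1)%:R : K)^-1)%:A.
Proof.
rewrite (@int01E _ a.+1) ?size_polyXn // big_ord_recr /= big1 ?add0r.
  by rewrite coefXn eqxx.
by move=> i _; rewrite coefXn /= (ltn_eqF (ltn_ord i)) scaler0.
Qed.

End Int01.

Lemma factr_neq0 (K : numFieldType) k : (k`!%:R : K) != 0.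
Proof. by rewrite pnatr_eq0 -lt0n fact_gt0. Qed.

Lemma natr_S_neq0 (K : numFieldType) k : (k.+1%:R : K) != 0.
Proof. by rewrite pnatr_eq0. Qed.

Section Beta.
Variables (K : numFieldType) (C : comAlgType K).

Lemma int01_beta a b :
  int01 (('X^a * (1 - 'X)^+b) : {poly C}) =
  ((a`!%:R * b`!%:R / (a + b).+1`!%:R : K))%:A.
Proof.
elim: b a => [|b IH] a.
  rewrite expr0 mulr1 int01Xn addn0 fact0 mulr1 factS natrM.
  congr (_%:A); have h1 := factr_neq0 K a; have h2 := natr_S_neq0 K a.
  by field; rewrite h1 addrC natr1 h2.
have -> : ('X^a * (1 - 'X)^+b.+1 : {poly C}) =
    'X^a * (1 - 'X)^+b - 'X^(a.+1) * (1 - 'X)^+b.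
  by rewrite exprS exprSr; ring.
rewrite raddfB /= !IH -scalerBl; congr (_ *: _).
rewrite addSn addnS !factS !natrM.
have h1 := factr_neq0 K a; have h2 := factr_neq0 K b.
have h3 := factr_neq0 K (a + b); have h4 := natr_S_neq0 K (a + b).
have h5 := natr_S_neq0 K (a + b).+1.
rewrite -!natr1 in h4 h5 *; field.
by rewrite h3 -natrD h4 h5.
Qed.
End Beta.


Lemma alpha_mE (K : numFieldType) L q : (q <= (2 * L).+1)%N ->
  alpha_m K L.+1 q.+1 =
  ((2 * L).+1)`!%:R / (q`!%:R * ((2 * L).+1 - q)`!%:R).
Proof.
elim: q => [|q IH] hq.
  rewrite /alpha_m big_geq // fact0 mul1r subn0 divff //; exact: factr_neq0.
rewrite /alpha_m big_nat_recr //= -/(alpha_m K L.+1 q.+1) IH; last exact: ltnW.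
have -> : (2 * L.+1 - q.+1)%N = ((2 * L).+1 - q)%N by rewrite mulnS subSS.
have E : ((2 * L).+1 - q)%N = ((2 * L).+1 - q.+1).+1 by rewrite subnSK.
rewrite E; set r := ((2 * L).+1 - q.+1)%N; rewrite (factS r) (factS q) !natrM.
have h1 := factr_neq0 K q; have h2 := factr_neq0 K r.
have h3 := natr_S_neq0 K q; have h4 := natr_S_neq0 K r.
rewrite -!natr1 in h3 h4 *; by field; rewrite h1 h2 h3 h4.
Qed.

Lemma coef_id (K : numFieldType) L q : (q <= L)%N ->
  alpha_m K L.+1 q.+1 =
  (((2 * L.+1).-1)`!%:R / ((L.+1.-1)`!%:R ^+ 2)) *
  ('C(L, q)%:R * (L`!%:R * (L - q)`!%:R / ((L + (L - q)).+1)`!%:R)).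
Proof.
move=> hq; rewrite alpha_mE; last by lia.
have -> : (2 * L.+1).-1 = (2 * L).+1 by rewrite mulnS.
have -> : (L + (L - q)).+1 = ((2 * L).+1 - q)%N by lia.
have hb := bin_fact hq; have hC : ('C(L, q)%:R : K) = L`!%:R / (q`!%:R * (L - q)`!%:R).
  rewrite -hb natrM natrM mulfK //; rewrite mulf_neq0 //; exact: factr_neq0.
rewrite hC /=.
have h1 := factr_neq0 K q; have h2 := factr_neq0 K (L - q).
have h3 := factr_neq0 K L; have h4 := factr_neq0 K ((2 * L).+1 - q).
by field; rewrite h1 h2 h3 h4.
Qed.


Lemma nth_map0 (T1 T2 : Type) (x1 : T1) (x2 : T2) (f : T1 -> T2) s k :
  f x1 = x2 -> nth x2 (map f s) k = f (nth x1 s k).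
Proof. by move=> hf; elim: s k => [|x s IH] [|k] //=. Qed.

Lemma sTrE (K : numFieldType) N m (s : seq 'M[K]_N.+1) : size s = m ->
  sTr s = (m`!%:R)^-1 * \sum_(σ : 'S_m) \tr (\prod_(j < m) nth 0 s (σ j)).
Proof. by move=> hs; subst m. Qed.

Section CW.
Variables (K : numFieldType) (C : comAlgType K) (n h N : nat)
  (e : 'I_h -> 'I_n) (T : 'I_n -> 'M[K]_N.+1).
Local Notation B := {poly C}.
Definition iotaC : {rmorphism K -> B} := (polyC \o in_alg C).
Definition TB i : 'M[B]_N.+1 := map_mx iotaC (T i).

Lemma kcoef_sTu (s : seq 'I_n) m : size s = m ->
  iotaC (kcoef T s) *+ m`! = sTu (map TB s).
Proof.
move=> hs; rewrite /kcoef (@sTrE _ _ m); last by rewrite size_map.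
rewrite (@sTuE _ _ m); last by rewrite size_map.
rewrite -mulr_natl -(rmorph_nat iotaC) rmorphM mulrA -rmorphM mulfV ?factr_neq0 //.
rewrite rmorph1 mul1r rmorph_sum; apply: eq_bigr => σ _.
rewrite -trace_map_mx rmorph_prod; congr (\tr _); apply: eq_bigr => j _.
have -> : map TB s = map (map_mx iotaC) (map T s) by rewrite -map_comp.
by rewrite (@nth_map0 _ _ 0 0) // raddf0.
Qed.

Lemma natmul_cancelB (x y : B) k : x *+ k`! = y *+ k`! -> x = y.
Proof.
move=> hxy.
have H (z : B) : z = iotaC ((k`!%:R)^-1) * (z *+ k`!).
  by rewrite -[z *+ _]mulr_natl -(rmorph_nat iotaC) mulrA -rmorphM mulVf ?factr_neq0 // rmorph1 mul1r.
by rewrite (H x) (H y) hxy.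
Qed.

Section XY.
Variables (X : 'I_h -> C) (Y : 'I_n -> C) (L : nat) (l : 'I_n).
Definition FB : 'M[B]_N.+1 := map_mx polyC (mxF e T X).
Definition DB : 'M[B]_N.+1 := map_mx polyC (mxw T Y).

Lemma polyC_scal (k : K) (x : C) : (k *: x)%:P = x%:P * iotaC k.
Proof. by rewrite /iotaC /= -polyCM mulr_algr. Qed.

Lemma FB_sum : FB = \sum_a (X a)%:P *: TB (e a).
Proof.
apply/matrixP => i j; rewrite !mxE summxE rmorph_sum; apply: eq_bigr => a _.
rewrite !mxE; exact: polyC_scal.
Qed.

Lemma DB_sum : DB = \sum_k (Y k)%:P *: TB k.
Proof.
apply/matrixP => i j; rewrite !mxE summxE rmorph_sum; apply: eq_bigr => k _.
rewrite !mxE; exact: polyC_scal.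
Qed.

Definition cq q : C :=
  \sum_(a : q.-tuple 'I_h) \sum_(d : (L - q).-tuple 'I_n)
     kcoef T (map e a ++ d ++ [:: l]) *: (\prod_(x <- d) Y x * \prod_(x <- a) X x).

Lemma sTu_expand q : (q <= L)%N ->
  sTu (nseq q FB ++ nseq (L - q) DB ++ [:: TB l]) = (cq q)%:P *+ L.+1`!.
Proof.
move=> hq.
rewrite FB_sum -[nseq q _ ++ _]cat0s -sTu_tsum.
rewrite /cq rmorph_sum -sumrMnl; apply: eq_bigr => a _.
rewrite DB_sum -sTu_tsum mulr_sumr rmorph_sum -sumrMnl; apply: eq_bigr => d _.
have -> : [seq TB (e x) | x <- a] ++ [seq TB i | i <- d] ++ [:: TB l] =
    map TB (map e a ++ d ++ [:: l]) by rewrite !map_cat -map_comp.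
rewrite -(@kcoef_sTu _ L.+1); last by rewrite !size_cat size_map !size_tuple /= addn1 addnS subnKC.
rewrite -mulr_algl [in RHS]rmorphM [in RHS]rmorphM !rmorph_prod /=.
rewrite !mulrnAr; congr (_ *+ _). rewrite /iotaC /=. ring.
Qed.

Lemma CW_main :
  \sum_(1 <= p < L.+2) alpha_m K L.+1 p *:
     \sum_(a : (p.-1).-tuple 'I_h) \sum_(d : (L.+1 - p).-tuple 'I_n)
       kcoef T (map e a ++ d ++ [:: l]) *: (\prod_(x <- d) Y x * \prod_(x <- a) X x)
  = (((2 * L.+1).-1)`!%:R / ((L.+1.-1)`!%:R ^+ 2) : K) *:
     int01 (\tr (TB l *m ('X%:M *m FB + ('X * (1 - 'X))%:M *m DB) ^+ L)).
Proof.
set Mx := ('X%:M *m FB + _).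
have Htr : \tr (TB l *m Mx ^+ L) = \sum_(0 <= q < L.+1)
    (('X^q * ('X * (1 - 'X)) ^+ (L - q)) * (cq q)%:P) *+ 'C(L, q).
  apply: (natmul_cancelB (k := L.+1)).
  rewrite mulmxE -sTu_trace /Mx !mul_scalar_mx sTu_binom -sumrMnl.
  apply: eq_big_nat => q /andP [_ hq].
  rewrite -[nseq q _ ++ _]cat0s sTu_scal /= sTu_scal sTu_expand //.
  by rewrite !mulrnAr -!mulrnA mulnC mulrA.
rewrite Htr [int01 _]raddf_sum scaler_sumr big_add1 /=.
apply: eq_big_nat => q /andP [_ hq].
rewrite raddfMn /=.
have -> : ('X^q * ('X * (1 - 'X)) ^+ (L - q) * (cq q)%:P : {poly C}) =
    (cq q)%:P * ('X^L * (1 - 'X) ^+ (L - q)).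
  rewrite exprMn mulrA -exprD subnKC //; ring.
rewrite int01CM int01_beta mulr_algr scalerMnl scalerA.
rewrite (@coef_id K L q) //; congr (_ *: _); congr (_ * _).
by rewrite mulr_natl.
Qed.
End XY.
End CW.


Lemma prod_split_comm (R : pzRingType) (I : Type) (r : seq I) (F G : I -> R) :
  (forall i j, G i * F j = F j * G i) ->
  \prod_(i <- r) (F i * G i) = \prod_(i <- r) F i * \prod_(i <- r) G i.
Proof.
move=> hc; elim: r => [|x r IH]; first by rewrite !big_nil mulr1.
rewrite !big_cons IH !mulrA; congr (_ * _); rewrite -!mulrA; congr (_ * _).
by apply: commr_prod => j _; rewrite /GRing.comm hc.
Qed.

Section MM.
Variables (K : numFieldType) (A : algType K) (r : nat) (g : 'I_r -> A).
Hypothesis gcomm : forall i j, g i * g j = g j * g i.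

Lemma gX_comm i j k1 k2 : g i ^+ k1 * g j ^+ k2 = g j ^+ k2 * g i ^+ k1.
Proof. by apply: commrX; apply/esym; apply: commrX; rewrite /GRing.comm gcomm. Qed.

Lemma mmap1_M m1 m2 : mmap1 g (m1 + m2)%MM = mmap1 g m1 * mmap1 g m2.
Proof.
rewrite /mmap1 -prod_split_comm; last by move=> i j; rewrite gX_comm.
by apply: eq_bigr => i _; rewrite mnmDE exprD.
Qed.

Lemma mmap1_comm m1 m2 : mmap1 g m1 * mmap1 g m2 = mmap1 g m2 * mmap1 g m1.
Proof. by rewrite -!mmap1_M addmC. Qed.

Definition phi (p : {mpoly K[r]}) : A := mmap (in_alg A) g p.

Lemma phi_is_multiplicative : multiplicative phi.
Proof.
split=> //= [p q|]; last first.
  by rewrite /phi /mmap msupp1 big_seq1 mpolyCK rmorph1 mul1r mmap11.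
rewrite /phi; pose_big_enough i.
  rewrite (mpolywME (k := i)) // raddf_sum /= !(mmapE i) //.
  rewrite big_distrlr /= pair_bigA; apply/eq_bigr=> /=.
  case=> j1 j2 _ /=; rewrite mmapZ mmapX; apply/esym.
  by rewrite mmap1_M /= !mulr_algl -!scalerAl -!scalerAr scalerA.
by close.
Qed.

End MM.


Lemma tr_sum (R : pzRingType) d (I : finType) (F : I -> 'M[R]_d) :
  \tr (\sum_i F i) = \sum_i \tr (F i).
Proof. exact: raddf_sum. Qed.

Lemma int01_sum (K : numFieldType) (A : algType K) (I : finType) (F : I -> {poly A}) :
  int01 (\sum_i F i) = \sum_i int01 (F i).
Proof. exact: raddf_sum. Qed.

Lemma commrZ (K : numFieldType) (A : algType K) (x y : A) (k : K) :
  GRing.comm x y -> GRing.comm x (k *: y).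
Proof. by move=> hxy; rewrite /GRing.comm -scalerAr -scalerAl hxy. Qed.

Section AW.
Variables (K : numFieldType) (A : algType K) (n h N : nat) (e : 'I_h -> 'I_n)
  (c : 'I_n -> 'I_n -> 'I_n -> K) (T : 'I_n -> 'M[K]_N.+1)
  (w : 'I_n -> A) (f : 'I_h -> A).
Hypothesis hanti : forall i j, w i * w j = - (w j * w i).
Hypothesis hcent : forall b x, f b * x = x * f b.
Hypothesis hrep : forall i j, T i *m T j - T j *m T i = \sum_k c i j k *: T k.

Local Notation dv := (dform c w).

Lemma comm_dv x i : (forall p q, GRing.comm x (w p * w q)) -> GRing.comm x (dv i).
Proof.
move=> H; rewrite /dform; apply: commrN; apply: commrZ.
apply: commr_sum => p _; apply: commr_sum => q _; exact: commrZ.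
Qed.

Lemma comm_w_ww l p q : GRing.comm (w l) (w p * w q).
Proof.
by rewrite /GRing.comm mulrA (hanti l p) mulNr -!mulrA (hanti l q) mulrN opprK.
Qed.

Lemma comm_w_dv l i : GRing.comm (w l) (dv i).
Proof. by apply: comm_dv => p q; apply: comm_w_ww. Qed.

Lemma comm_dv_dv i j : GRing.comm (dv i) (dv j).
Proof.
apply: comm_dv => p q; apply: commrM; apply/commr_sym; exact: comm_w_dv.
Qed.

Definition gen (j : 'I_(h + n)) : A :=
  match split j with inl a => f a | inr i => dv i end.

Lemma gen_comm i j : gen i * gen j = gen j * gen i.
Proof.
rewrite /gen; case: (split i) => [a|a]; case: (split j) => [b|b] //; rewrite ?hcent //.
exact: comm_dv_dv.
Qed.

Local Notation C := {mpoly K[h + n]}.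
Definition phiA : C -> A := phi gen.

Lemma phiA_is_additive : additive phiA.
Proof. by move=> p q; rewrite /phiA /phi raddfB. Qed.
HB.instance Definition _ := GRing.isAdditive.Build C A phiA phiA_is_additive.
HB.instance Definition _ := GRing.isMultiplicative.Build C A phiA
  (phi_is_multiplicative gen_comm).

Lemma phiAZ k p : phiA (k *: p) = k *: phiA p.
Proof. by rewrite /phiA /phi mmapZ /= mulr_algl. Qed.

Lemma phiA_gen j : phiA 'X_j = gen j.
Proof. by rewrite /phiA /phi mmapX mmap1U. Qed.

Lemma phiA_alg k : phiA (k%:A) = k%:A.
Proof. by rewrite -[k%:A]mulr1 mulr_algl phiAZ rmorph1. Qed.

Lemma phiA_comm_w (x : C) l : GRing.comm (w l) (phiA x).
Proof.
rewrite /phiA /phi /mmap; apply: commr_sum => m _; apply: commrM.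
  by rewrite /GRing.comm /GRing.in_alg /= mulr_algl mulr_algr.
apply: commr_prod => i _; apply: commrX; rewrite /gen; case: (split i) => [a|a].
  by rewrite /GRing.comm hcent.
exact: comm_w_dv.
Qed.

Lemma mxw_sq : mxw T w *m mxw T w = - mxw T dv.
Proof.
apply/matrixP => i j; rewrite !mxE.
set S := \sum_p \sum_q (T p *m T q) i j *: (w p * w q).
have L1 : \sum_k (mxw T w i k * mxw T w k j) = S.
  rewrite /S.
  transitivity (\sum_k \sum_p \sum_q (T p i k * T q k j) *: (w p * w q)).
    apply: eq_bigr => k _; rewrite !mxE mulr_suml; apply: eq_bigr => p _.
    rewrite mulr_sumr; apply: eq_bigr => q _.
    by rewrite -scalerAl -scalerAr scalerA.
  rewrite exchange_big /=; apply: eq_bigr => p _.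
  rewrite exchange_big /=; apply: eq_bigr => q _.
  by rewrite mxE scaler_suml.
have L3 : \sum_p \sum_q (T q *m T p) i j *: (w p * w q) = - S.
  rewrite /S exchange_big /= -sumrN; apply: eq_bigr => p _.
  rewrite -sumrN; apply: eq_bigr => q _.
  by rewrite hanti scalerN.
have L2 : \sum_r T r i j *: dv r =
    - ((2%:R : K)^-1 *: (S - \sum_p \sum_q (T q *m T p) i j *: (w p * w q))).
  rewrite /dform.
  transitivity (\sum_r \sum_p \sum_q
      (- (T r i j * ((2%:R : K)^-1 * c p q r))) *: (w p * w q)).
    apply: eq_bigr => r _; rewrite scalerN scalerA scaler_sumr -sumrN.
    apply: eq_bigr => p _; rewrite scaler_sumr -sumrN; apply: eq_bigr => q _.
    by rewrite scalerA -scaleNr mulrA.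
  transitivity (- ((2%:R : K)^-1 *: \sum_p \sum_q
       (\sum_r c p q r * T r i j) *: (w p * w q))).
    rewrite exchange_big /= scaler_sumr -sumrN; apply: eq_bigr => p _.
    rewrite exchange_big /= scaler_sumr -sumrN; apply: eq_bigr => q _.
    rewrite scaler_suml scaler_sumr -sumrN; apply: eq_bigr => r _.
    by rewrite scalerA -scaleNr; congr (_ *: _); rewrite mulrC -mulrA [c p q r * _]mulrC.
  congr (- (_ *: _)); rewrite /S -sumrB; apply: eq_bigr => p _.
  rewrite -sumrB; apply: eq_bigr => q _.
  rewrite -scalerBl; congr (_ *: _).
  have := congr1 (fun M : 'M[K]_N.+1 => M i j) (hrep p q); rewrite !mxE => ->.
  by rewrite summxE; apply: eq_bigr => r _; rewrite mxE.
rewrite L1 L2 L3 opprK opprK.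
by rewrite -mulr2n -scaler_nat scalerA mulVf ?scale1r // pnatr_eq0.
Qed.
Definition Xg (a : 'I_h) : C := 'X_(lshift n a).
Definition Yg (i : 'I_n) : C := 'X_(rshift h i).

Lemma phiA_X a : phiA (Xg a) = f a.
Proof. by rewrite /Xg phiA_gen /gen -[lshift n a]/(unsplit (inl a)) unsplitK. Qed.

Lemma phiA_Y i : phiA (Yg i) = dv i.
Proof. by rewrite /Yg phiA_gen /gen -[rshift h i]/(unsplit (inr i)) unsplitK. Qed.

Definition LHSl L (l : 'I_n) : C :=
  \sum_(1 <= p < L.+2) alpha_m K L.+1 p *:
     \sum_(a : (p.-1).-tuple 'I_h) \sum_(d : (L.+1 - p).-tuple 'I_n)
       kcoef T (map e a ++ d ++ [:: l]) *: (\prod_(x <- d) Yg x * \prod_(x <- a) Xg x).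

Lemma fprod_central (a : seq 'I_h) x : \prod_(y <- a) f y * x = x * \prod_(y <- a) f y.
Proof.
have : GRing.comm x (\prod_(y <- a) f y).
  by apply: commr_prod => y _; rewrite /GRing.comm hcent.
by move=> ->.
Qed.

Lemma alpha_glue L : alpha e c T L.+1 w f = \sum_l phiA (LHSl L l) * w l.
Proof.
rewrite /alpha /LHSl.
under [RHS]eq_bigr => l _ do rewrite rmorph_sum mulr_suml.
rewrite [RHS]exchange_big /=; apply: eq_big_nat => p _.
under [RHS]eq_bigr => l _ do rewrite phiAZ -scalerAl.
rewrite -scaler_sumr; congr (_ *: _).
under [RHS]eq_bigr => l _ do rewrite rmorph_sum mulr_suml.
rewrite [RHS]exchange_big /=; apply: eq_bigr => a _.
rewrite /Omega' mulr_suml.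
under [RHS]eq_bigr => l _ do rewrite rmorph_sum mulr_suml.
rewrite [RHS]exchange_big /=; apply: eq_bigr => d _.
rewrite mulr_suml; apply: eq_bigr => l _.
rewrite phiAZ rmorphM !rmorph_prod /=.
under [in RHS]eq_bigr => x _ do rewrite phiA_Y.
have -> : \prod_(i <- a) phiA (Xg i) = \prod_(i <- a) f i.
  by apply: eq_bigr => i _; exact: phiA_X.
rewrite -!scalerAl; congr (_ *: _).
by rewrite -!mulrA fprod_central.
Qed.

Local Notation Phi := (map_poly phiA).

Lemma int01_map (q : {poly C}) : int01 (Phi q) = phiA (int01 q).
Proof.
rewrite (@int01E _ _ _ (size q)); last first.
  by rewrite map_polyE; apply: leq_trans (size_Poly _) _; rewrite size_map.
rewrite /int01 rmorph_sum; apply: eq_bigr => i _; rewrite coef_map; exact/esym/phiAZ.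
Qed.

Definition RHSl L (l : 'I_n) : C :=
  (((2 * L.+1).-1)`!%:R / ((L.+1.-1)`!%:R ^+ 2) : K) *:
     int01 (\tr (TB C T l *m ('X%:M *m FB e T Xg + ('X * (1 - 'X))%:M *m DB T Yg) ^+ L)).

Lemma rhs_glue L : rhs e T L.+1 w f = \sum_l w l * phiA (RHSl L l).
Proof.
rewrite /rhs /RHSl; cbv zeta.
set W := map_mx polyC (mxw T w).
set F := map_mx polyC (mxF e T f).
set Mx := ('X%:M *m FB e T Xg + _).
have hF : map_mx Phi (FB e T Xg) = F.
  apply/matrixP => i j; rewrite !mxE map_polyC; apply: congr1.
  by rewrite raddf_sum; apply: eq_bigr => a _; rewrite -phiA_X; exact: phiAZ.
have hD : map_mx Phi (DB T Yg) = map_mx polyC (mxw T dv).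
  apply/matrixP => i j; rewrite !mxE map_polyC; apply: congr1.
  by rewrite raddf_sum; apply: eq_bigr => a _; rewrite -phiA_Y; exact: phiAZ.
have E (x : {poly A}) (D : 'M[{poly A}]_N.+1) : x%:M *m - D = (- x)%:M *m D.
  rewrite mulmxN -mulNmx; congr (_ *m _).
  by apply/matrixP => i j; rewrite !mxE mulNrn.
have hWW : W *m W = - map_mx polyC (mxw T dv) by rewrite /W -map_mxM mxw_sq map_mxN.
have hT : ('X * ('X - 1))%:M *m (W *m W) = ('X * (1 - 'X))%:M *m map_mx polyC (mxw T dv).
  rewrite hWW E; congr (_%:M *m _).
  by rewrite !mulrBr mulr1 opprB.
have hM : map_mx Phi Mx = 'X%:M *m F + ('X * ('X - 1))%:M *m (W *m W).
  rewrite hT /Mx map_mxD !map_mxM !map_scalar_mx.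
  have PX : Phi 'X = 'X by apply: map_polyX.
  have PM : Phi ('X * (1 - 'X)) = 'X * (1 - 'X).
    by rewrite rmorphM rmorphB rmorph1; congr (_ * (1 - _)); exact: PX.
  by rewrite /= PX PM hF hD.
have hW : W = \sum_l (w l)%:P *: map_mx Phi (TB C T l).
  apply/matrixP => i j; rewrite !mxE summxE rmorph_sum; apply: eq_bigr => k _.
  rewrite !mxE -mulr_algr rmorphM; congr (_ * _).
  have -> : iotaC {mpoly K[(h + n)]} (T k i j) = ((T k i j)%:A : C)%:P by [].
  rewrite map_polyC; apply: congr1; exact/esym/phiA_alg.
rewrite -hM {1}hW mulmx_suml tr_sum.
have hX : (map_mx Phi Mx) ^+ L = map_mx Phi (Mx ^+ L) by rewrite rmorphXn.
rewrite int01_sum scaler_sumr; apply: eq_bigr => l _.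
rewrite [L.+1.-1]/= hX -scalemxAl mxtraceZ -map_mxM.
have -> : \tr (map_mx Phi (TB C T l *m Mx ^+ L)) = Phi (\tr (TB C T l *m Mx ^+ L)).
  exact: trace_map_mx.
by rewrite int01CM int01_map scalerAr -phiAZ.
Qed.

Lemma alpha_eq_rhs m : (0 < m)%N -> alpha e c T m w f = rhs e T m w f.
Proof.
case: m => // L _; rewrite alpha_glue rhs_glue; apply: eq_bigr => l _.
have -> : LHSl L l = RHSl L l by apply: CW_main.
exact/esym/phiA_comm_w.
Qed.
End AW.


Lemma zmod_id (V : zmodType) (p q r s : V) :
  - p - - q - (- r - - s) = - (p - r - (q - s)).
Proof. by rewrite !opprB !opprK addrACA [RHS]addrACA [LHS]addrC [- p + _]addrC. Qed.

Lemma gauged_anti (K : numFieldType) (A : algType K) (n h : nat)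
    (e : 'I_h -> 'I_n) (w : 'I_n -> A) (a : 'I_h -> A) :
  (forall i j, w i * w j = - (w j * w i)) ->
  (forall b b', a b * a b' = - (a b' * a b)) ->
  (forall i b, w i * a b = - (a b * w i)) ->
  forall i j, gauged e w a i * gauged e w a j = - (gauged e w a j * gauged e w a i).
Proof.
move=> hw ha hwa i j; rewrite /gauged.
set Ai := \sum_(b | e b == i) a b; set Aj := \sum_(b | e b == j) a b.
have E1 : w i * Aj = - (Aj * w i).
  by rewrite mulr_sumr mulr_suml -sumrN; apply: eq_bigr => b _; rewrite hwa.
have E2 : Ai * w j = - (w j * Ai).
  rewrite mulr_suml mulr_sumr -sumrN; apply: eq_bigr => b _.
  by rewrite hwa opprK.
have E3 : Ai * Aj = - (Aj * Ai).
  rewrite mulr_suml mulr_sumr -sumrN; apply: eq_bigr => b _.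
  rewrite mulr_sumr mulr_suml -sumrN; apply: eq_bigr => b' _; exact: ha.
rewrite !mulrBr !mulrBl hw E1 E2 E3.
exact: zmod_id.
Qed.

Theorem mainTheorem4 (K : numFieldType) (A : algType K) (n h N m : nat)
    (e : 'I_h -> 'I_n) (c : 'I_n -> 'I_n -> 'I_n -> K)
    (T : 'I_n -> 'M[K]_N.+1)
    (w : 'I_n -> A) (a : 'I_h -> A) (f : 'I_h -> A) :
  (0 < m)%N ->
  injective e ->
  (* c are the structure constants of the Lie algebra g *)
  (forall i j k, c i j k = - c j i k) ->
  (forall i j k l, \sum_s (c i j s * c s k l + c j k s * c s i l
                           + c k i s * c s j l) = 0) ->
  (* T is a matrix representation of g *)
  (forall i j, T i *m T j - T j *m T i = \sum_k c i j k *: T k) ->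
  (* w^i, A^a odd (anticommuting), F^a central even *)
  (forall i j, w i * w j = - (w j * w i)) ->
  (forall b b', a b * a b' = - (a b' * a b)) ->
  (forall i b, w i * a b = - (a b * w i)) ->
  (forall b x, f b * x = x * f b) ->
  alpha e c T m w f = rhs e T m w f /\
  alpha e c T m (gauged e w a) f = rhs e T m (gauged e w a) f.
Proof.
move=> hm _ _ _ hrep hw ha hwa hf; split.
  exact: alpha_eq_rhs.
apply: alpha_eq_rhs => //; exact: gauged_anti.
Qed.
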